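(* Let $q\geq 2$ be an integer and fix a real number $c_0>0$. For every real number $b>0$ there exists a positive integer $n_0$ such that for every integer $n\geq n_0$ and every integer $k$ of the form $k=\frac{n(q-1)}{2q}\bigl(\log(n(q-1))-c\bigr)$ with $0\leq c\leq \min\{c_0,\log(n(q-1))\}$, we have $$\Vert \nu_n^{*k}-\pi_n\Vert_{TV}\geq 1-(4q+b)e^{-c}.$$
   Context: For integers $n\geq1$, $q\geq2$, the Hamming scheme $H(n,q)$ is the graph with vertex set $X_n=\{0,1,\dots,q-1\}^n$ in which $x$ and $x'$ are adjacent ($x\sim x'$) iff they differ in exactly one coordinate. The simple random walk has transition probability $p_n(x,x')=\frac{1}{n(q-1)}$ if $x\sim x'$ and $0$ otherwise. Let $p_n^{(k)}$ denote the $k$-step transition probability ($p_n^{(0)}(x,x')=\delta_{x,x'}$), $x^{(0)}=(0,\dots,0)$, and $\nu_n^{*k}(x)=p_n^{(k)}(x^{(0)},x)$. $\pi_n$ is the uniform probability measure on $X_n$. For measures $\mu,\nu$ on $X_n$, $\Vert\mu-\nu\Vert_{TV}=\max_{S\subset X_n}|\mu(S)-\nu(S)|$. *)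

(* Defs.v *)
From mathcomp Require Import all_boot.
From Stdlib Require Import Reals.
Set Implicit Arguments. Unset Strict Implicit. Unset Printing Implicit Defensive.

Definition vtx (q n : nat) : finType := {ffun 'I_n -> 'I_q}.

Definition rsum (T : finType) (P : pred T) (F : T -> R) : R :=
  \big[Rplus/0%R]_(x : T | P x) F x.

Definition adj (q n : nat) (x y : vtx q n) : bool :=
  #|[set i : 'I_n | x i != y i]| == 1.

Definition p1 (q n : nat) (x y : vtx q n) : R :=
  if adj x y then (1 / INR (n * (q - 1)))%R else 0%R.

Fixpoint pk (q n : nat) (k : nat) (x y : vtx q n) : R :=
  match k with
  | 0 => if x == y then 1%R else 0%R
  | k'.+1 => rsum predT (fun z => (pk k' x z * p1 z y)%R)
  end.

Definition origin (q n : nat) (hq : 0 < q) : vtx q n := [ffun _ => Ordinal hq].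

Definition nu (q n : nat) (hq : 0 < q) (k : nat) (x : vtx q n) : R :=
  pk k (origin n hq) x.

Definition unif (q n : nat) (x : vtx q n) : R := (1 / INR (#|vtx q n|))%R.

Definition tv (q n : nat) (mu nu : vtx q n -> R) : R :=
  \big[Rmax/0%R]_(S : {set vtx q n})
     Rabs (rsum (fun x => x \in S) mu - rsum (fun x => x \in S) nu).

(* Main.v *)
Require Import Defs.
From mathcomp Require Import all_boot.
From Stdlib Require Import Reals.
From HB Require Import structures.
From Stdlib Require Import Lra.

Lemma Radd_assoc_ssr : associative Rplus. Proof. move=> *; rewrite Rplus_assoc //. Qed.
HB.instance Definition _ := Monoid.isComLaw.Build R 0%R Rplus Radd_assoc_ssr Rplus_comm Rplus_0_l.

Set Implicit Arguments. Unset Strict Implicit. Unset Printing Implicit Defensive.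
Open Scope R_scope.

Definition ind (b : bool) : R := if b then 1 else 0.

Lemma rsum_ext (T : finType) (P : pred T) (F G : T -> R) :
  (forall x, P x -> F x = G x) -> rsum P F = rsum P G.
Proof. move=> h; apply: eq_bigr => x; exact: h. Qed.

Lemma rsum_add (T : finType) (P : pred T) (F G : T -> R) :
  rsum P (fun x => F x + G x) = rsum P F + rsum P G.
Proof. by rewrite /rsum big_split. Qed.

Lemma rsum_scal (T : finType) (P : pred T) (c : R) (F : T -> R) :
  rsum P (fun x => c * F x) = c * rsum P F.
Proof.
rewrite /rsum; elim/big_rec2: _ => [|i y1 y2 _ ->]; first by rewrite Rmult_0_r.
by rewrite Rmult_plus_distr_l.
Qed.

Lemma rsum_le (T : finType) (P : pred T) (F G : T -> R) :
  (forall x, P x -> F x <= G x) -> rsum P F <= rsum P G.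
Proof.
move=> h; rewrite /rsum; elim/big_rec2: _ => [|i y1 y2 Pi le]; first lra.
by apply: Rplus_le_compat => //; apply: h.
Qed.

Lemma rsum_ge0 (T : finType) (P : pred T) (F : T -> R) :
  (forall x, P x -> 0 <= F x) -> 0 <= rsum P F.
Proof.
move=> h; rewrite /rsum; elim/big_rec: _ => [|i y Pi le]; first lra.
by have := h i Pi; lra.
Qed.

Lemma rsum_const (T : finType) (P : pred T) (c : R) :
  rsum P (fun _ => c) = INR #|P| * c.
Proof.
rewrite /rsum big_const; elim: #|_| => [|m IH]; first by rewrite /=; lra.
rewrite iterS IH S_INR; lra.
Qed.

Lemma rsum_mkcond (T : finType) (P : pred T) (F : T -> R) :
  rsum P F = rsum predT (fun x => F x * ind (P x)).
Proof.
rewrite /rsum big_mkcond; apply: eq_bigr => x _; rewrite /ind; case: (P x); lra.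
Qed.

Lemma rsum_exch (T U : finType) (F : T -> U -> R) :
  rsum predT (fun x => rsum predT (fun y => F x y)) =
  rsum predT (fun y => rsum predT (fun x => F x y)).
Proof. by rewrite /rsum exchange_big. Qed.

Lemma rsumD1 (T : finType) (P : pred T) (F : T -> R) (i : T) :
  P i -> rsum P F = F i + rsum (fun j => P j && (j != i)) F.
Proof. by move=> Pi; rewrite /rsum (bigD1 i). Qed.

Lemma rsumD1T (T : finType) (F : T -> R) (i : T) :
  rsum predT F = F i + rsum (fun j => j != i) F.
Proof. by rewrite /rsum (bigD1 i). Qed.

Definition upd (q n : nat) (z : vtx q n) (i : 'I_n) (v : 'I_q) : vtx q n :=
  [ffun j => if j == i then v else z j].

Lemma upd_at (q n : nat) (z : vtx q n) i v : upd z i v i = v.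
Proof. by rewrite /upd ffunE eqxx. Qed.

Lemma adj_upd (q n : nat) (z : vtx q n) i v : adj z (upd z i v) = (v != z i).
Proof.
rewrite /adj.
have -> : [set j | z j != upd z i v j] = (if v == z i then set0 else [set i] : {set 'I_n}).
  apply/setP => j; rewrite !inE /upd ffunE.
  case: (eqVneq v (z i)) => [->|ne]; rewrite ?inE; case: (eqVneq j i) => [->|nji] //=.
  - by rewrite eqxx.
  - by rewrite eqxx.
  - by rewrite eq_sym ne.
  - by rewrite eqxx.
by case: (eqVneq v (z i)) => _; rewrite ?cards0 ?cards1.
Qed.

Lemma adj_char (q n : nat) (z y : vtx q n) i :
  adj z y -> z i != y i -> upd z i (y i) = y.
Proof.
rewrite /adj => /cards1P [j hj] hi.
have ij : i = j.
  have : i \in [set j0 | z j0 != y j0] by rewrite inE.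
  by rewrite hj inE => /eqP.
apply/ffunP => k; rewrite /upd ffunE.
case: (eqVneq k i) => [->//|nki].
have : k \notin [set j0 | z j0 != y j0] by rewrite hj inE -ij.
by rewrite inE negbK => /eqP.
Qed.

Lemma adj_sym (q n : nat) (x y : vtx q n) : adj x y = adj y x.
Proof.
rewrite /adj (_ : [set j | x j != y j] = [set j | y j != x j]) //; apply/setP => j; by rewrite !inE eq_sym.
Qed.

Lemma nbr_sum (q n : nat) (z : vtx q n) (g : vtx q n -> R) :
  rsum predT (fun y => ind (adj z y) * g y) =
  rsum predT (fun i => rsum (fun v => v != z i) (fun v => g (upd z i v))).
Proof.
transitivity (rsum predT (fun y => rsum predT (fun i => ind (adj z y && (z i != y i)) * g y))).
  apply: rsum_ext => y _.
  case A: (adj z y).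
  - rewrite (rsum_ext (G := fun i => g y * ind (z i != y i))); last by move=> *; rewrite Rmult_comm.
    rewrite -(rsum_mkcond (fun i => z i != y i) (fun _ => g y)) rsum_const.
    move: A; rewrite /adj cardsE => /eqP ->; rewrite /ind /=; lra.
  - rewrite (rsum_ext (G := fun _ => 0)); last by move=> *; rewrite /ind /=; lra.
    rewrite rsum_const /ind; lra.
rewrite rsum_exch; apply: rsum_ext => i _.
rewrite (rsum_ext (G := fun y => g y * ind (adj z y && (z i != y i)))); last by move=> *; rewrite Rmult_comm.
rewrite -(rsum_mkcond (fun y => adj z y && (z i != y i)) g).
rewrite /rsum (reindex_onto (upd z i) (fun y => y i)); last first.
  by move=> y /andP [a b]; apply: adj_char.
apply: eq_bigl => v; rewrite adj_upd upd_at eqxx andbT.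
by rewrite eq_sym andbb.
Qed.

Definition Pop (q n : nat) (g : vtx q n -> R) (z : vtx q n) : R :=
  rsum predT (fun y => p1 z y * g y).

Lemma Pop_nbr (q n : nat) (g : vtx q n -> R) (z : vtx q n) :
  Pop g z = / INR (n * (q - 1)) *
    rsum predT (fun i => rsum (fun v => v != z i) (fun v => g (upd z i v))).
Proof.
rewrite -nbr_sum -rsum_scal /Pop; apply: rsum_ext => y _.
rewrite /p1 /ind; case: (adj z y); lra.
Qed.

Definition Ek (q n : nat) (hq0 : (0 < q)%nat) (k : nat) (g : vtx q n -> R) : R :=
  rsum predT (fun x => @nu q n hq0 k x * g x).

Lemma Ek_step (q n : nat) (hq0 : (0 < q)%nat) k (g : vtx q n -> R) :
  Ek hq0 k.+1 g = Ek hq0 k (Pop g).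
Proof.
rewrite /Ek /nu /=.
transitivity (rsum predT (fun x => rsum predT (fun z =>
   pk k (origin n hq0) z * (p1 z x * g x)))).
  apply: rsum_ext => x _; rewrite Rmult_comm -rsum_scal; apply: rsum_ext => z _; lra.
rewrite rsum_exch; apply: rsum_ext => z _; rewrite rsum_scal //.
Qed.

Lemma Ek_ext (q n : nat) (hq0 : (0 < q)%nat) k (g h : vtx q n -> R) :
  (forall x, g x = h x) -> Ek hq0 k g = Ek hq0 k h.
Proof. by move=> e; apply: rsum_ext => x _; rewrite e. Qed.

Lemma Ek_lin (q n : nat) (hq0 : (0 < q)%nat) k (g h : vtx q n -> R) a b c :
  Ek hq0 k (fun x => a * g x + b * h x + c) =
  a * Ek hq0 k g + b * Ek hq0 k h + c * Ek hq0 k (fun _ : vtx q n => 1).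
Proof.
rewrite /Ek -!rsum_scal -!rsum_add; apply: rsum_ext => x _; lra.
Qed.

Definition zro (q : nat) (hq0 : (0 < q)%nat) : 'I_q := Ordinal hq0.

Definition Zc (q n : nat) (hq0 : (0 < q)%nat) (x : vtx q n) : R :=
  rsum predT (fun j => ind (x j == zro hq0)).

Lemma Zc_upd (q n : nat) (hq0 : (0 < q)%nat) (z : vtx q n) i v :
  Zc hq0 (upd z i v) = Zc hq0 z - ind (z i == zro hq0) + ind (v == zro hq0).
Proof.
rewrite /Zc !(rsumD1T _ i) upd_at.
rewrite (rsum_ext (G := fun j => ind (z j == zro hq0))).
  set s := rsum _ _; set a := ind (z i == _); set b := ind (v == _); lra.
move=> j nji; rewrite /upd ffunE; by rewrite (negbTE nji).
Qed.

Lemma ind_sum1 (q : nat) (o : 'I_q) : rsum predT (fun v => ind (v == o)) = 1.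
Proof.
rewrite (rsumD1 _ _ (i := o)) // eqxx (rsum_ext (G := fun _ => 0)).
  rewrite rsum_const /ind; lra.
by move=> v /= /negbTE ->.
Qed.

Lemma inner_sum (q : nat) (o w : 'I_q) (A B : R) :
  rsum (fun v => v != w) (fun v => A + B * ind (v == o)) =
  INR (q - 1) * A + B * (1 - ind (w == o)).
Proof.
rewrite rsum_add rsum_const rsum_scal.
have -> : #|(fun v => v != w)| = (q - 1)%nat.
  by transitivity #|predC1 w|; [apply: eq_card | rewrite cardC1 card_ord subn1].
congr (_ + B * _).
have := ind_sum1 o; rewrite (rsumD1T _ w).
set s := rsum _ _; set a := ind (w == o); lra.
Qed.

Lemma outer_sum (q n : nat) (hq0 : (0 < q)%nat) (z : vtx q n) (a b : R) :
  rsum predT (fun i => a + b * ind (z i == zro hq0)) = INR n * a + b * Zc hq0 z.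
Proof.
by rewrite rsum_add rsum_const rsum_scal card_ord.
Qed.

Definition fC (q n : nat) (hq0 : (0 < q)%nat) (x : vtx q n) : R :=
  Zc hq0 x - INR n / INR q.

Lemma INR_N (q n : nat) : (0 < q)%nat -> INR (n * (q - 1))%nat = INR n * (INR q - 1).
Proof. by move=> h; rewrite mult_INR minus_INR ?(INR_1) //; apply/leP. Qed.

Lemma INR_q1 (q : nat) : (0 < q)%nat -> INR (q - 1)%nat = INR q - 1.
Proof. by move=> h; rewrite minus_INR ?(INR_1) //; apply/leP. Qed.

Lemma Pop_1 (q n : nat) (hq0 : (0 < q)%nat) (z : vtx q n) :
  INR (n * (q - 1))%nat <> 0 -> Pop (fun _ => 1) z = 1.
Proof.
move=> hN; rewrite Pop_nbr.
rewrite (rsum_ext (G := fun i => 1 * 0 + 0 * ind (z i == zro hq0) + INR (q - 1) * 1)); last first.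
  move=> i _; rewrite (rsum_ext (G := fun v => 1 + 0 * ind (v == zro hq0))); last by move=> *; lra.
  rewrite inner_sum; lra.
rewrite (rsum_ext (G := fun i => INR (q-1) + 0 * ind (z i == zro hq0))); last by move=> *; lra.
move: hN; rewrite outer_sum INR_N // INR_q1 // => hN; field; split => h; apply: hN; rewrite h; ring.
Qed.

Lemma Pop_f (q n : nat) (hq0 : (0 < q)%nat) (z : vtx q n) :
  INR (n * (q - 1))%nat <> 0 ->
  Pop (@fC q n hq0) z = (1 - INR q / INR (n * (q - 1))%nat) * fC hq0 z.
Proof.
move=> hN; rewrite Pop_nbr.
rewrite (rsum_ext (G := fun i => (INR (q - 1) * fC hq0 z + 1) + (- INR q) * ind (z i == zro hq0))); last first.
  move=> i _; rewrite (rsum_ext (G := fun v => (fC hq0 z - ind (z i == zro hq0)) + 1 * ind (v == zro hq0))); last first.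
    move=> v _; rewrite /fC Zc_upd; set a := ind (z i == _); set b := ind (v == _); lra.
  rewrite inner_sum INR_q1 //; set a := ind (z i == _); ring.
rewrite outer_sum.
have hq : INR q <> 0 by apply: not_0_INR; apply/eqP; rewrite -lt0n.
move: hN; rewrite INR_q1 // INR_N // /fC => hN.
field; repeat split; try assumption; move=> h; apply: hN; rewrite h; ring.
Qed.

Lemma Pop_f2 (q n : nat) (hq0 : (0 < q)%nat) (z : vtx q n) :
  INR (n * (q - 1))%nat <> 0 ->
  Pop (fun x => fC hq0 x * fC hq0 x) z =
    (1 - 2 * INR q / INR (n * (q - 1))%nat) * (fC hq0 z * fC hq0 z)
    + (INR q - 2) / INR (n * (q - 1))%nat * fC hq0 z + 2 / INR q.
Proof.
move=> hN; rewrite Pop_nbr.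
rewrite (rsum_ext (G := fun i => ((INR q - 1) * (fC hq0 z * fC hq0 z) + 2 * fC hq0 z + 1)
    + (- 2 * INR q * fC hq0 z + INR q - 2) * ind (z i == zro hq0))); last first.
  move=> i _; rewrite (rsum_ext (G := fun v => (fC hq0 z - ind (z i == zro hq0)) * (fC hq0 z - ind (z i == zro hq0))
        + (2 * (fC hq0 z - ind (z i == zro hq0)) + 1) * ind (v == zro hq0))); last first.
    move=> v _; rewrite /fC Zc_upd /ind; case: (v == zro hq0); ring.
  rewrite inner_sum INR_q1 // /ind; case: (z i == zro hq0); ring.
rewrite outer_sum.
have hq : INR q <> 0 by apply: not_0_INR; apply/eqP; rewrite -lt0n.
move: hN; rewrite INR_N // /fC => hN.
field; repeat split; try assumption; move=> h; apply: hN; rewrite h; ring.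
Qed.

Lemma p1_ge0 (q n : nat) (x y : vtx q n) : 0 < INR (n * (q - 1))%nat -> 0 <= p1 x y.
Proof.
move=> h; rewrite /p1; case: (adj x y); last lra.
apply: Rlt_le; apply: Rdiv_lt_0_compat => //; lra.
Qed.

Lemma p1_sym (q n : nat) (x y : vtx q n) : p1 x y = p1 y x.
Proof. by rewrite /p1 adj_sym. Qed.

Lemma pk_ge0 (q n : nat) k (x y : vtx q n) : 0 < INR (n * (q - 1))%nat -> 0 <= pk k x y.
Proof.
move=> h; elim: k y => [|k IH] y /=.
  case: (x == y); lra.
apply: rsum_ge0 => z _; apply: Rmult_le_pos; [exact: IH | exact: p1_ge0].
Qed.

Lemma Ek0 (q n : nat) (hq0 : (0 < q)%nat) (g : vtx q n -> R) :
  Ek hq0 0 g = g (origin n hq0).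
Proof.
rewrite /Ek /nu (rsumD1T _ (origin n hq0)) /= eqxx.
rewrite (rsum_ext (G := fun _ => 0)); first by rewrite rsum_const; lra.
move=> x hx; rewrite eq_sym (negbTE hx); lra.
Qed.

Lemma Ek_scal (q n : nat) (hq0 : (0 < q)%nat) k (g : vtx q n -> R) c :
  Ek hq0 k (fun x => c * g x) = c * Ek hq0 k g.
Proof. rewrite /Ek -rsum_scal; apply: rsum_ext => x _; ring. Qed.

Lemma Ek_1 (q n : nat) (hq0 : (0 < q)%nat) k :
  INR (n * (q - 1))%nat <> 0 -> Ek hq0 k (fun _ : vtx q n => 1) = 1.
Proof.
move=> hN; elim: k => [|k IH]; first by rewrite Ek0.
by rewrite Ek_step (Ek_ext _ _ (h := fun _ => 1)) // => x; rewrite Pop_1.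
Qed.

Lemma Ek_f (q n : nat) (hq0 : (0 < q)%nat) k :
  INR (n * (q - 1))%nat <> 0 ->
  Ek hq0 k (@fC q n hq0) = (1 - INR q / INR (n * (q - 1))%nat) ^ k * fC hq0 (origin n hq0).
Proof.
move=> hN; elim: k => [|k IH]; first by rewrite Ek0 /=; ring.
rewrite Ek_step (Ek_ext _ _ (h := fun x => (1 - INR q / INR (n * (q - 1))%nat) * fC hq0 x)).
  by rewrite Ek_scal IH /=; ring.
by move=> x; rewrite Pop_f.
Qed.

Lemma Zc_origin (q n : nat) (hq0 : (0 < q)%nat) : Zc hq0 (origin n hq0) = INR n.
Proof.
rewrite /Zc (rsum_ext (G := fun _ => 1)); first by rewrite rsum_const card_ord; ring.
by move=> j _; rewrite /origin ffunE /zro eqxx.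
Qed.

Lemma fC_origin (q n : nat) (hq0 : (0 < q)%nat) :
  fC hq0 (origin n hq0) = INR (n * (q - 1))%nat / INR q.
Proof.
rewrite /fC Zc_origin INR_N //.
have hq : INR q <> 0 by apply: not_0_INR; apply/eqP; rewrite -lt0n.
field; exact: hq.
Qed.

Lemma Ek_f2 (q n : nat) (hq0 : (0 < q)%nat) k :
  0 < INR (n * (q - 1))%nat -> 0 <= 1 - 2 * INR q / INR (n * (q - 1))%nat ->
  let m := (1 - INR q / INR (n * (q - 1))%nat) ^ k * fC hq0 (origin n hq0) in
  Ek hq0 k (fun x : vtx q n => fC hq0 x * fC hq0 x) <= m * m + m + INR (n * (q - 1))%nat / (INR q * INR q).
Proof.
move=> hN hl2.
have hN' : INR (n * (q - 1))%nat <> 0 by lra.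
have hq : 0 < INR q by apply: lt_0_INR; apply/ltP.
have hl1 : 0 <= 1 - INR q / INR (n * (q - 1))%nat.
  have : 0 <= INR q / INR (n * (q - 1))%nat by apply: Rlt_le; apply: Rdiv_lt_0_compat.
  lra.
have hf0 : 0 <= fC hq0 (origin n hq0).
  by rewrite fC_origin; apply: Rlt_le; apply: Rdiv_lt_0_compat.
elim: k => [|k IH] /=.
  rewrite Ek0; have : 0 <= fC hq0 (origin n hq0) * 1 by lra.
  have : 0 <= INR (n * (q - 1))%nat / (INR q * INR q).
    by apply: Rlt_le; apply: Rdiv_lt_0_compat => //; nra.
  nra.
rewrite Ek_step.
rewrite (Ek_ext _ _ (h := fun x => (1 - 2 * INR q / INR (n * (q - 1))%nat) * (fC hq0 x * fC hq0 x)
    + (INR q - 2) / INR (n * (q - 1))%nat * fC hq0 x + 2 / INR q)); last by move=> x; rewrite Pop_f2.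
rewrite Ek_lin Ek_f // Ek_1 //.
set N := INR (n * (q - 1))%nat in IH hl2 hl1 hN hN' *.
set m := (1 - INR q / N) ^ k * fC hq0 (origin n hq0) in IH *.
set E2 := Ek hq0 k _ in IH *.
have hm : 0 <= m by apply: Rmult_le_pos => //; apply: pow_le.
have key : (1 - 2 * INR q / N) * (m * m + m + N / (INR q * INR q)) + (INR q - 2) / N * m + 2 / INR q * 1
   <= (1 - INR q / N) * m * ((1 - INR q / N) * m) + (1 - INR q / N) * m + N / (INR q * INR q).
  have e : (1 - INR q / N) * m * ((1 - INR q / N) * m) + (1 - INR q / N) * m + N / (INR q * INR q)
     - ((1 - 2 * INR q / N) * (m * m + m + N / (INR q * INR q)) + (INR q - 2) / N * m + 2 / INR q * 1)
     = (INR q * m / N) * (INR q * m / N) + 2 * m / N.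
    field; lra.
  have : 0 <= (INR q * m / N) * (INR q * m / N) + 2 * m / N.
    have : 0 <= 2 * m / N by apply: Rmult_le_pos; [lra | apply: Rlt_le; apply: Rinv_0_lt_compat].
    nra.
  lra.
have e2 : (1 - INR q / N) * (1 - INR q / N) ^ k * fC hq0 (origin n hq0) = (1 - INR q / N) * m.
  by rewrite /m; ring.
rewrite e2; simpl in IH.
have := Rmult_le_compat_l _ _ _ hl2 IH.
lra.
Qed.

Lemma le_bigmax (T : finType) (F : T -> R) (x : T) :
  F x <= \big[Rmax/0]_(y : T) F y.
Proof.
have : x \in index_enum T by rewrite mem_index_enum.
elim: (index_enum T) => [//|y r IH]; rewrite inE big_cons => /orP [/eqP <-|/IH h].
  exact: Rmax_l.
apply: Rle_trans h _; exact: Rmax_r.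
Qed.

Definition Su (q n : nat) (g : vtx q n -> R) : R := rsum predT g.

Lemma Su_stat (q n : nat) (hq0 : (0 < q)%nat) (g : vtx q n -> R) :
  INR (n * (q - 1))%nat <> 0 -> Su (Pop g) = Su g.
Proof.
move=> hN; rewrite /Su /Pop rsum_exch; apply: rsum_ext => y _.
rewrite (rsum_ext (G := fun x => g y * (p1 y x * 1))); last by move=> x _; rewrite p1_sym; ring.
by rewrite rsum_scal -/(Pop (fun _ => 1) y) (Pop_1 hq0) //; ring.
Qed.

Lemma Su_ext (q n : nat) (g h : vtx q n -> R) : (forall x, g x = h x) -> Su g = Su h.
Proof. by move=> e; apply: rsum_ext => x _. Qed.

Lemma Su_lin (q n : nat) (g h : vtx q n -> R) a b c :
  Su (fun x => a * g x + b * h x + c) = a * Su g + b * Su h + c * INR #|vtx q n|.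
Proof.
have -> : c * INR #|vtx q n| = rsum predT (fun _ : vtx q n => c) by rewrite rsum_const Rmult_comm.
rewrite /Su -!rsum_scal -!rsum_add; apply: rsum_ext => x _; lra.
Qed.

Lemma Su_f (q n : nat) (hq0 : (0 < q)%nat) :
  0 < INR (n * (q - 1))%nat -> Su (@fC q n hq0) = 0.
Proof.
move=> hN.
have hq : 0 < INR q by apply: lt_0_INR; apply/ltP.
have e := Su_stat hq0 (@fC q n hq0) (Rgt_not_eq _ _ hN).
rewrite (Su_ext (h := fun x => (1 - INR q / INR (n * (q - 1))%nat) * fC hq0 x + 0 * fC hq0 x + 0)) in e; last first.
  by move=> x; rewrite Pop_f; [ring | lra].
rewrite Su_lin in e.
set S := Su _ in e *.
have : INR q / INR (n * (q - 1))%nat * S = 0 by lra.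
move/Rmult_integral => [h|//].
have : 0 < INR q / INR (n * (q - 1))%nat by apply: Rdiv_lt_0_compat.
lra.
Qed.

Lemma Su_f2 (q n : nat) (hq0 : (0 < q)%nat) :
  0 < INR (n * (q - 1))%nat ->
  Su (fun x : vtx q n => fC hq0 x * fC hq0 x) =
    INR #|vtx q n| * (INR (n * (q - 1))%nat / (INR q * INR q)).
Proof.
move=> hN.
have hq : 0 < INR q by apply: lt_0_INR; apply/ltP.
have e := Su_stat hq0 (fun x : vtx q n => fC hq0 x * fC hq0 x) (Rgt_not_eq _ _ hN).
rewrite (Su_ext (h := fun x => (1 - 2 * INR q / INR (n * (q - 1))%nat) * (fC hq0 x * fC hq0 x)
    + (INR q - 2) / INR (n * (q - 1))%nat * fC hq0 x + 2 / INR q)) in e; last first.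
  by move=> x; rewrite Pop_f2 //; lra.
rewrite Su_lin Su_f // in e.
set N := INR (n * (q - 1))%nat in e hN *.
set S := Su _ in e *.
have e' : 2 * INR q / N * S = 2 / INR q * INR #|vtx q n| by lra.
have hN' : N <> 0 by lra.
have hq' : INR q <> 0 by lra.
apply: (Rmult_eq_reg_l (2 * INR q / N)); last by apply: Rgt_not_eq; apply: Rdiv_lt_0_compat; lra.
rewrite e'; field; lra.
Qed.


Lemma ind_compl (b : bool) : ind b + ind (~~ b) = 1.
Proof. by case: b; rewrite /ind /=; lra. Qed.

Lemma card_vtx_pos (q n : nat) (hq0 : (0 < q)%nat) : 0 < INR #|vtx q n|.
Proof.
apply: lt_0_INR; apply/ltP; apply/card_gt0P; by exists (origin n hq0).
Qed.

Lemma tv_lb (q n : nat) (hq0 : (0 < q)%nat) k :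
  0 < INR (n * (q - 1))%nat -> 0 <= 1 - 2 * INR q / INR (n * (q - 1))%nat ->
  let m := (1 - INR q / INR (n * (q - 1))%nat) ^ k * fC hq0 (origin n hq0) in
  0 < m ->
  1 - 4 / m - 8 * INR (n * (q - 1))%nat / (INR q * INR q * (m * m))
    <= @tv q n (@nu q n hq0 k) (@unif q n).
Proof.
move=> hN hl2 m hm.
have hq : 0 < INR q by apply: lt_0_INR; apply/ltP.
have hN' : INR (n * (q - 1))%nat <> 0 by lra.
pose good (x : vtx q n) := if Rle_dec (m / 2) (fC hq0 x) then true else false.
pose S := [set x | good x].
rewrite /tv.
apply: Rle_trans (le_bigmax (fun S0 : {set vtx q n} => Rabs (rsum (fun x => x \in S0) (@nu q n hq0 k)
   - rsum (fun x => x \in S0) (@unif q n))) S).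
apply: Rle_trans (Rle_abs _).
rewrite (rsum_mkcond (fun x => x \in S) (nu hq0 k)) (rsum_mkcond (fun x => x \in S) (@unif q n)).
rewrite (rsum_ext (G := fun x => nu hq0 k x * ind (good x))); last by move=> x _; rewrite inE.
rewrite (rsum_ext (P := predT) (F := fun x => unif x * ind (x \in S)) (G := fun x => unif x * ind (good x))); last by move=> x _; rewrite inE.
set A := rsum predT (fun x => nu hq0 k x * ind (good x)).
set B := rsum predT (fun x => unif x * ind (good x)).
set Ac := rsum predT (fun x => nu hq0 k x * ind (~~ good x)).
have hm2 : 0 < m * m by apply: Rmult_lt_0_compat.
have hAAc : A + Ac = 1.
  rewrite -(Ek_1 hq0 k hN') /A /Ac -rsum_add /Ek; apply: rsum_ext => x _.
  rewrite -Rmult_plus_distr_l ind_compl; ring.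
have hAc : Ac <= 4 / (m * m) * (m + INR (n * (q - 1))%nat / (INR q * INR q)).
  apply: (Rle_trans _ (Ek hq0 k (fun x => (4 / (m * m)) * ((fC hq0 x * fC hq0 x) + (- 2 * m) * fC hq0 x + m * m)))).
    apply: rsum_le => x _.
    apply: Rmult_le_compat_l; first by apply: pk_ge0.
    rewrite /ind /good; case: (Rle_dec (m / 2) (fC hq0 x)) => h /=.
      apply: Rmult_le_pos; first by apply: Rlt_le; apply: Rdiv_lt_0_compat => //; lra.
      have -> : fC hq0 x * fC hq0 x + -2 * m * fC hq0 x + m * m = (m - fC hq0 x) * (m - fC hq0 x) by ring.
      exact: (Rle_0_sqr _).
    have h1 : m / 2 < m - fC hq0 x by lra.
    have h2 : m * m / 4 <= (m - fC hq0 x) * (m - fC hq0 x).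
      have -> : m * m / 4 = (m / 2) * (m / 2) by field.
      apply: Rmult_le_compat; lra.
    have -> : fC hq0 x * fC hq0 x + -2 * m * fC hq0 x + m * m = (m - fC hq0 x) * (m - fC hq0 x) by ring.
    apply: (Rmult_le_reg_l (m * m)) => //.
    have -> : m * m * (4 / (m * m) * ((m - fC hq0 x) * (m - fC hq0 x))) = 4 * ((m - fC hq0 x) * (m - fC hq0 x)) by field; lra.
    lra.
  rewrite Ek_scal.
  rewrite (Ek_ext _ _ (h := fun x => 1 * (fC hq0 x * fC hq0 x) + (- 2 * m) * fC hq0 x + m * m)); last by move=> x; ring.
  rewrite Ek_lin Ek_f // Ek_1 // -/m.
  have := Ek_f2 hq0 k hN hl2; rewrite /= -/m => h2.
  apply: Rmult_le_compat_l; first by apply: Rlt_le; apply: Rdiv_lt_0_compat => //; lra.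
  lra.
have hB : B <= 4 / (m * m) * (INR (n * (q - 1))%nat / (INR q * INR q)).
  apply: (Rle_trans _ (rsum predT (fun x => (/ INR #|vtx q n| * (4 / (m * m))) * (fC hq0 x * fC hq0 x)))).
    apply: rsum_le => x _; rewrite /unif.
    have hc := card_vtx_pos n hq0.
    have hu : 0 <= 1 / INR #|vtx q n| by apply: Rlt_le; apply: Rdiv_lt_0_compat; lra.
    rewrite /ind /good; case: (Rle_dec (m / 2) (fC hq0 x)) => h /=.
      have h2 : m * m / 4 <= fC hq0 x * fC hq0 x.
        have -> : m * m / 4 = (m / 2) * (m / 2) by field.
        apply: Rmult_le_compat; lra.
      have -> : / INR #|vtx q n| * (4 / (m * m)) * (fC hq0 x * fC hq0 x)
          = 1 / INR #|vtx q n| * (4 / (m * m) * (fC hq0 x * fC hq0 x)) by field; lra.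
      rewrite Rmult_1_r; rewrite -{1}(Rmult_1_r (1 / _)).
      apply: Rmult_le_compat_l => //.
      apply: (Rmult_le_reg_l (m * m)) => //.
      have -> : m * m * (4 / (m * m) * (fC hq0 x * fC hq0 x)) = 4 * (fC hq0 x * fC hq0 x) by field; lra.
      lra.
    rewrite Rmult_0_r; apply: Rmult_le_pos; last by exact: (Rle_0_sqr _).
    apply: Rmult_le_pos; first by apply: Rlt_le; apply: Rinv_0_lt_compat.
    by apply: Rlt_le; apply: Rdiv_lt_0_compat => //; lra.
  rewrite rsum_scal -/(Su (fun x : vtx q n => fC hq0 x * fC hq0 x)) Su_f2 //.
  have hc := card_vtx_pos n hq0.
  right; field; lra.
have e : 1 - 4 / m - 8 * INR (n * (q - 1))%nat / (INR q * INR q * (m * m))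
   = 1 - 4 / (m * m) * (m + INR (n * (q - 1))%nat / (INR q * INR q))
       - 4 / (m * m) * (INR (n * (q - 1))%nat / (INR q * INR q)).
  field; lra.
rewrite e; lra.
Qed.


Lemma exp_le' x y : x <= y -> exp x <= exp y.
Proof. move=> h; case: (Rle_lt_or_eq_dec _ _ h) => [h'|->]; [left; exact: exp_increasing | right; reflexivity]. Qed.

Lemma exp_le_1p2x x : 0 <= x <= 1/2 -> exp x <= 1 + 2 * x.
Proof.
move=> [h0 h1].
have e1 := exp_ineq1_le (- x).
have hp : 0 < exp (- x) by apply: exp_pos.
have e2 : exp x = / exp (- x) by rewrite exp_Ropp Rinv_inv.
rewrite e2.
apply: (Rmult_le_reg_l (exp (- x))) => //.
rewrite Rinv_r; last lra.
have : 0 <= (exp (-x) - (1 - x)) * (1 + 2 * x) by apply: Rmult_le_pos; lra.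
nra.
Qed.

Lemma final_real (Q N L c c0 b d eps P : R) :
  2 <= Q -> 0 < N -> exp L = N -> 0 < b -> 0 <= eps <= d / 2 -> d <= 1/2 -> d <= b / 32 ->
  c <= c0 -> ln (8 * Q / b) <= L / 2 - c0 / 2 - 1 / 2 -> exp (- ((L - c) / 2) - eps) <= P ->
  1 - (4 * Q + b) * exp (- c) <= 1 - 4 / (P * (N / Q)) - 8 * N / (Q * Q * ((P * (N / Q)) * (P * (N / Q)))).
Proof.
move=> hQ hN eL hb [he0 he1] hd1 hd2 hc hL hP.
set E := exp (- ((L - c) / 2) - eps) in hP *.
have hE : 0 < E by apply: exp_pos.
have hPp : 0 < P by lra.
have ec := exp_pos c.
have emc : exp (- c) = / exp c by rewrite exp_Ropp.
set Y := exp (L / 2 - c / 2 - eps).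
have hY : 8 * Q / b <= Y.
  rewrite -(exp_ln (8 * Q / b)); last by apply: Rdiv_lt_0_compat; lra.
  apply: exp_le'; lra.
have hNE : N * E = Y * exp c.
  rewrite -eL /E /Y -!exp_plus; apply: f_equal; field.
have hYp : 0 < Y by apply: exp_pos.
have C1 : 4 / (P * (N / Q)) <= b / 2 * exp (- c).
  have le1 : 4 / (P * (N / Q)) <= 4 * Q / (N * E).
    have hQ0 : 0 < Q by lra.
    have -> : 4 / (P * (N / Q)) = 4 * Q / (N * P) by field; lra.
    apply: Rmult_le_compat_l; first lra.
    apply: Rinv_le_contravar; first by apply: Rmult_lt_0_compat.
    apply: Rmult_le_compat_l; lra.
  apply: Rle_trans le1 _.
  rewrite hNE emc.
  have hb8 : 8 * Q <= b * Y.
    have := Rmult_le_compat_l b _ _ (Rlt_le _ _ hb) hY.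
    have -> : b * (8 * Q / b) = 8 * Q by field; lra.
    lra.
  have -> : 4 * Q / (Y * exp c) = (4 * Q / Y) * / exp c by field; lra.
  apply: Rmult_le_compat_r; first by apply: Rlt_le; apply: Rinv_0_lt_compat.
  apply: (Rmult_le_reg_l Y) => //.
  have -> : Y * (4 * Q / Y) = 4 * Q by field; lra.
  nra.
set W := exp (2 * eps).
have hW : W <= 1 + 2 * (2 * eps) by apply: exp_le_1p2x; lra.
have hNE2 : N * (E * E) = exp c / W.
  rewrite -eL /E /W /Rdiv -exp_Ropp -!exp_plus; apply: f_equal; field.
have hWp : 0 < W by apply: exp_pos.
have C2 : 8 * N / (Q * Q * ((P * (N / Q)) * (P * (N / Q)))) <= (8 + b / 2) * exp (- c).
  have -> : 8 * N / (Q * Q * ((P * (N / Q)) * (P * (N / Q)))) = 8 / (N * (P * P)) by field; lra.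
  have le2 : 8 / (N * (P * P)) <= 8 / (N * (E * E)).
    apply: Rmult_le_compat_l; first lra.
    apply: Rinv_le_contravar; first by apply: Rmult_lt_0_compat => //; apply: Rmult_lt_0_compat.
    apply: Rmult_le_compat_l; first lra.
    apply: Rmult_le_compat; lra.
  apply: Rle_trans le2 _.
  rewrite hNE2 emc.
  have -> : 8 / (exp c / W) = 8 * W * / exp c by field; lra.
  apply: Rmult_le_compat_r; first by apply: Rlt_le; apply: Rinv_0_lt_compat.
  lra.
have : 8 * exp (- c) <= 4 * Q * exp (- c).
  apply: Rmult_le_compat_r; [apply: Rlt_le; apply: exp_pos | lra].
lra.
Qed.


Lemma exp_pow' (a : R) (k : nat) : exp a ^ k = exp (INR k * a).
Proof.
elim: k => [|k IH]; first by rewrite /= Rmult_0_l exp_0.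
rewrite [_ ^ _.+1]/= IH -exp_plus S_INR; apply: f_equal; ring.
Qed.

Lemma lam_pow_lb (x : R) (k : nat) : 0 <= x <= 1/2 ->
  exp (INR k * (- x - 2 * x * x)) <= (1 - x) ^ k.
Proof.
move=> [h0 h1].
rewrite -exp_pow'; apply: pow_incr; split; first by apply: Rlt_le; apply: exp_pos.
have e1 := exp_ineq1_le (x + 2 * x * x).
have hp : 0 < exp (x + 2 * x * x) by apply: exp_pos.
have -> : - x - 2 * x * x = - (x + 2 * x * x) by ring.
rewrite exp_Ropp.
apply: (Rmult_le_reg_l (exp (x + 2 * x * x))) => //.
rewrite Rinv_r; last lra.
have : 0 <= (exp (x + 2 * x * x) - (1 + x + 2 * x * x)) * (1 - x) by apply: Rmult_le_pos; lra.
have : 0 <= x * x * (1 - 2 * x) by apply: Rmult_le_pos; [apply: Rle_0_sqr | lra].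
nra.
Qed.

Lemma ln_lt_self (y : R) : 0 < y -> ln y < y.
Proof.
move=> hy; case: (Rlt_or_le (ln y) y) => // h.
have := exp_le' h; rewrite exp_ln //.
have := exp_ineq1_le y; lra.
Qed.

Lemma mainR (q : nat) (hq : (2 <= q)%nat) (c0 : R) (hc0 : 0 < c0) :
  forall b : R, 0 < b ->
  exists n0 : nat, (0 < n0)%nat /\
    forall (n k : nat) (c : R), (n0 <= n)%nat ->
      0 <= c -> c <= Rmin c0 (ln (INR (n * (q - 1))%nat)) ->
      INR k = INR (n * (q - 1))%nat / (2 * INR q) * (ln (INR (n * (q - 1))%nat) - c) ->
      1 - (4 * INR q + b) * exp (- c) <= @tv q n (@nu q n (ltnW hq) k) (@unif q n).
Proof.
move=> b hb.
have hQ : 2 <= INR q by rewrite -[2]/(INR 2); apply: le_INR; apply/leP.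
pose d := Rmin (1/2) (b/32).
have hd1 : d <= 1/2 by apply: Rmin_l.
have hd2 : d <= b/32 by apply: Rmin_r.
have hd0 : 0 < d by apply: Rmin_glb_lt; lra.
pose T := Rmax (Rmax (4 * INR q) ((4 * INR q / d) * (4 * INR q / d))) (exp (2 * ln (8 * INR q / b) + c0 + 1)).
have [n1 hn1] := INR_unbounded T.
exists n1.+1; split => //.
move=> n k c hn hc hcm hk.
have hq0 : (0 < q)%nat by apply: leq_trans hq.
set N := INR (n * (q - 1))%nat in hcm hk *.
set Q := INR q in hQ hk T hn1 *.
have hNe : N = INR n * (Q - 1) by rewrite /N INR_N.
have hnT : T < INR n.
  have : INR n1.+1 <= INR n by apply: le_INR; apply/leP.
  rewrite S_INR; lra.
have hn0 : 0 <= INR n by apply: pos_INR.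
have hNT : T < N by rewrite hNe; nra.
have hT1 : 4 * Q <= T by rewrite /T; apply: Rle_trans (Rmax_l _ _); apply: Rmax_l.
have hT2 : (4 * Q / d) * (4 * Q / d) <= T by rewrite /T; apply: Rle_trans (Rmax_l _ _); apply: Rmax_r.
have hT3 : exp (2 * ln (8 * Q / b) + c0 + 1) <= T by apply: Rmax_r.
have hN : 0 < N by lra.
set L := ln N in hcm hk *.
have eL : exp L = N by rewrite /L exp_ln.
have hL : 2 * ln (8 * Q / b) + c0 + 1 < L.
  rewrite /L -[X in X < _]ln_exp; apply: ln_increasing; [apply: exp_pos | lra].
have hcL : c <= L by apply: Rle_trans hcm (Rmin_r _ _).
have hcc : c <= c0 by apply: Rle_trans hcm (Rmin_l _ _).
set s := sqrt N.
have hs : s * s = N by rewrite /s sqrt_sqrt; lra.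
have hs0 : 0 < s by apply: sqrt_lt_R0.
have hsd : 4 * Q / d < s.
  case: (Rlt_or_le (4 * Q / d) s) => // h.
  have : s * s <= (4 * Q / d) * (4 * Q / d) by apply: Rmult_le_compat; lra.
  lra.
have hLs : L <= 2 * s.
  have : L = 2 * ln s by rewrite /L -hs ln_mult //; ring.
  have := ln_lt_self hs0; lra.
set eps := (L - c) * Q / N.
have he0 : 0 <= eps.
  by apply: Rmult_le_pos; [apply: Rmult_le_pos; lra | apply: Rlt_le; apply: Rinv_0_lt_compat].
have he1 : eps <= d / 2.
  have h1 : eps <= L * Q / N.
    rewrite /eps /Rdiv; apply: Rmult_le_compat_r; first by apply: Rlt_le; apply: Rinv_0_lt_compat.
    apply: Rmult_le_compat_r; lra.
  have h2 : L * Q / N <= 2 * Q / s.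
    rewrite -hs.
    have -> : 2 * Q / s = 2 * s * Q / (s * s) by field; lra.
    rewrite /Rdiv; apply: Rmult_le_compat_r; first by apply: Rlt_le; apply: Rinv_0_lt_compat; nra.
    apply: Rmult_le_compat_r; lra.
  have h3 : 2 * Q / s <= d / 2.
    have h4 : 4 * Q < d * s.
      have := Rmult_lt_compat_l d _ _ hd0 hsd.
      have -> : d * (4 * Q / d) = 4 * Q by field; lra.
      done.
    apply: (Rmult_le_reg_l s) => //.
    have -> : s * (2 * Q / s) = 2 * Q by field; lra.
    lra.
  lra.
set x := Q / N.
have hx : 0 <= x <= 1/2.
  split; first by apply: Rlt_le; apply: Rdiv_lt_0_compat; lra.
  apply: (Rmult_le_reg_l N) => //.
  have -> : N * x = Q by rewrite /x; field; lra.
  lra.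
have hPk := lam_pow_lb k hx.
have ek : INR k * (- x - 2 * x * x) = - ((L - c) / 2) - eps.
  rewrite hk /x /eps; field; lra.
rewrite ek in hPk.
have hl2 : 0 <= 1 - 2 * Q / N.
  have : 2 * Q / N <= 1/2.
    apply: (Rmult_le_reg_l N) => //.
    have -> : N * (2 * Q / N) = 2 * Q by field; lra.
    lra.
  lra.
have H := @tv_lb q n (ltnW hq) k hN hl2.
rewrite /= fC_origin -/N -/Q -/x in H.
have hPp : 0 < (1 - x) ^ k by apply: Rlt_le_trans hPk; apply: exp_pos.
apply: Rle_trans (H _); last first.
  apply: Rmult_lt_0_compat => //; apply: Rdiv_lt_0_compat; lra.
apply: (@final_real _ _ L c c0 b d eps) => //; try lra.
all: idtac.
Qed.

Close Scope R_scope.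

Theorem theorem1p3 (q : nat) (hq : (2 <= q)%N) (c0 : R) (hc0 : (0 < c0)%R) :
  forall b : R, (0 < b)%R ->
  exists n0 : nat, (0 < n0)%N /\
    forall (n k : nat) (c : R), (n0 <= n)%N ->
      (0 <= c)%R -> (c <= Rmin c0 (ln (INR (n * (q - 1)))))%R ->
      INR k = (INR (n * (q - 1)) / (2 * INR q) * (ln (INR (n * (q - 1))) - c))%R ->
      (1 - (4 * INR q + b) * exp (- c) <= @tv q n (@nu q n (ltnW hq) k) (@unif q n))%R.
Proof.
exact (@mainR q hq c0 hc0).
Qed.
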